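(* Let $K$ be a field of characteristic $0$, let $E$ be the infinite-dimensional unitary Grassmann algebra over $K$ with even part $E_0$, let $A=\begin{pmatrix} E_0 & E\\ 0 & E\end{pmatrix}$, and for $k\geq1$ let $F_k(A)=K\langle x_1,\dots,x_k\rangle/(K\langle x_1,\dots,x_k\rangle\cap T(A))$. If $n\geq 2$ is even, then the polynomial \[[x_1,x_2][x_3,x_4]\cdots[x_{n+3},x_{n+4}]\] is a polynomial identity of both $F_n(A)$ and $F_{n+1}(A)$.
   Context: All algebras are associative and unitary over $K$; $K\langle X\rangle$ is the free unitary associative algebra on $X=\{x_1,x_2,\dots\}$, and $T(A)$ is the ideal of polynomial identities of $A$. $E$ is generated by anticommuting $e_1,e_2,\dots$ and $E_0$ is the span of basis products of even length. $[a,b]=ab-ba$. *)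

(* Defs.v *)
From mathcomp Require Import all_boot all_order all_algebra.
Set Implicit Arguments. Unset Strict Implicit. Unset Printing Implicit Defensive.
Import GRing.Theory.
Local Open Scope ring_scope.

Section Defs.
Variable K : fieldType.

(* An element is a formal K-linear combination of words e_{i1}...e_{ir}   *)
(* in the generators e_0, e_1, ... (a word is a seq nat, the empty word   *)
(* is the unit).  It is read modulo the defining relations of E          *)
(* (e_i e_j = - e_j e_i, hence e_i^2 = 0): a word with a repeated letter *)
(* is 0, and a word without repetition equals (-1)^(#inversions) times   *)
(* the basis product indexed by its sorted version.  The coefficient of  *)
(* x on the basis element e_S (S a strictly increasing seq) is gcoef x S.*)
Definition grass := seq (seq nat * K).

Definition gadd (x y : grass) : grass := x ++ y.
Definition gopp (x : grass) : grass := [seq (p.1, - p.2) | p <- x].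
Definition gconst (c : K) : grass := [:: ([::], c)].
Definition gmul (x y : grass) : grass :=
  [seq (p.1 ++ q.1, p.2 * q.2) | p <- x, q <- y].

Fixpoint ginv (w : seq nat) : nat :=
  if w is a :: w' then (count (fun b => b < a)%N w' + ginv w')%N else 0%N.

Definition gsign (w : seq nat) : K := (-1) ^+ ginv w.

Definition gcoef (x : grass) (S : seq nat) : K :=
  \sum_(p <- x | uniq p.1 && (sort leq p.1 == S)) gsign p.1 * p.2.

Definition gzero (x : grass) : Prop := forall S, gcoef x S = 0.

Definition geven (x : grass) : Prop := forall S, odd (size S) -> gcoef x S = 0.

(* The algebra A = [[E_0, E], [0, E]] of upper triangular 2x2 matrices.   *)
Record tri := Tri { t11 : grass; t12 : grass; t22 : grass }.

Definition tadd (a b : tri) : tri :=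
  Tri (gadd (t11 a) (t11 b)) (gadd (t12 a) (t12 b)) (gadd (t22 a) (t22 b)).
Definition topp (a : tri) : tri := Tri (gopp (t11 a)) (gopp (t12 a)) (gopp (t22 a)).
Definition tconst (c : K) : tri := Tri (gconst c) [::] (gconst c).
Definition tmul (a b : tri) : tri :=
  Tri (gmul (t11 a) (t11 b))
      (gadd (gmul (t11 a) (t12 b)) (gmul (t12 a) (t22 b)))
      (gmul (t22 a) (t22 b)).

Definition inA (a : tri) : Prop := geven (t11 a).
Definition tzero (a : tri) : Prop := [/\ gzero (t11 a), gzero (t12 a) & gzero (t22 a)].

(* Elements of the free unitary associative algebra K<X>, X = {x_1,x_2,..}*)
(* given as expressions (every polynomial is represented by such a term;  *)
(* x_i is NVar i).                                                       *)
Inductive ncterm :=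
| NVar of nat
| NConst of K
| NAdd of ncterm & ncterm
| NOpp of ncterm
| NMul of ncterm & ncterm.

Fixpoint evalA (v : nat -> tri) (t : ncterm) : tri :=
  match t with
  | NVar i => v i
  | NConst c => tconst c
  | NAdd t1 t2 => tadd (evalA v t1) (evalA v t2)
  | NOpp t1 => topp (evalA v t1)
  | NMul t1 t2 => tmul (evalA v t1) (evalA v t2)
  end.

Fixpoint nsubst (s : nat -> ncterm) (t : ncterm) : ncterm :=
  match t with
  | NVar i => s i
  | NConst c => NConst c
  | NAdd t1 t2 => NAdd (nsubst s t1) (nsubst s t2)
  | NOpp t1 => NOpp (nsubst s t1)
  | NMul t1 t2 => NMul (nsubst s t1) (nsubst s t2)
  end.

Fixpoint nvars_in (k : nat) (t : ncterm) : bool :=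
  match t with
  | NVar i => (1 <= i <= k)%N
  | NConst _ => true
  | NAdd t1 t2 => nvars_in k t1 && nvars_in k t2
  | NOpp t1 => nvars_in k t1
  | NMul t1 t2 => nvars_in k t1 && nvars_in k t2
  end.

Definition in_TA (t : ncterm) : Prop :=
  forall v : nat -> tri, (forall i, inA (v i)) -> tzero (evalA v t).

(* f is a polynomial identity of F_k(A) = K<x_1..x_k> / (K<x_1..x_k> ∩ T(A)):
   for all elements u_i = p_i + (K<x_1..x_k> ∩ T(A)) of F_k(A)
   (p_i ∈ K<x_1..x_k>), f(u_1, u_2, ...) = 0 in F_k(A), i.e.
   f(p_1, p_2, ...) ∈ T(A). *)
Definition PI_of_F (k : nat) (f : ncterm) : Prop :=
  forall s : nat -> ncterm, (forall i, nvars_in k (s i)) -> in_TA (nsubst s f).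

Definition ncomm (a b : ncterm) : ncterm := NAdd (NMul a b) (NOpp (NMul b a)).

(* [x_1,x_2][x_3,x_4]...[x_{2m-1},x_{2m}] (preceded by the unit factor 1) *)
Fixpoint cprod (m : nat) : ncterm :=
  if m is m'.+1 then
    NMul (cprod m') (ncomm (NVar (2 * m').+1) (NVar (2 * m').+2))
  else NConst 1.

End Defs.

(* Main.v *)
Require Import Defs.
From mathcomp Require Import all_boot all_order all_algebra.
From mathcomp Require Import zify.
Set Implicit Arguments. Unset Strict Implicit. Unset Printing Implicit Defensive.
Import GRing.Theory.
Local Open Scope ring_scope.

Section Gen.
Variables (K : fieldType) (R : pzRingType) (Pc : R -> Prop) (cst : K -> R) (z c : nat -> R) (k : nat).
Hypotheses (PcD : forall x y, Pc x -> Pc y -> Pc (x + y))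
  (PcN : forall x, Pc x -> Pc (- x))
  (PcM : forall x y, Pc x -> Pc y -> Pc (x * y))
  (Pc1 : Pc 1) (Pccst : forall a, Pc (cst a)) (Pcc : forall j, Pc (c j))
  (PcC : forall x y, Pc x -> Pc y -> x * y = y * x)
  (Pcz : forall x j, Pc x -> x * z j = z j * x)
  (zA : forall i j, z i * z j = - (z j * z i))
  (z0 : forall i, z i * z i = 0).

Fixpoint evR (g : nat -> R) (t : ncterm K) : R :=
  match t with
  | NVar i => g i
  | NConst a => cst a
  | NAdd t1 t2 => evR g t1 + evR g t2
  | NOpp t1 => - evR g t1
  | NMul t1 t2 => evR g t1 * evR g t2
  end.

Definition zseq (s : seq nat) : R := \prod_(j <- s) z j.

Lemma zseq_cat s1 s2 : zseq (s1 ++ s2) = zseq s1 * zseq s2.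
Proof. by rewrite /zseq big_cat. Qed.

Lemma z_zseq a u : z a * zseq u = (-1) ^+ size u * (zseq u * z a).
Proof.
elim: u => [|b u IH]; first by rewrite /zseq big_nil mul1r mulr1 expr0 mul1r.
rewrite /zseq !big_cons -/(zseq u).
have -> : z a * (z b * zseq u) = - (z b * (z a * zseq u)).
  by rewrite mulrA zA mulNr mulrA.
rewrite IH /= exprS mulN1r mulNr; congr (- _).
rewrite [LHS]mulrA (commr_sign (z b)) -[LHS]mulrA; by rewrite !mulrA.
Qed.

Lemma zseq_comm u w : zseq u * zseq w = (-1) ^+ (size u * size w) * (zseq w * zseq u).
Proof.
elim: u => [|a u IH]; first by rewrite /zseq big_nil mul1r mulr1 mul0n expr0 mul1r.
rewrite /zseq !big_cons -!/(zseq _) -mulrA IH.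
rewrite [LHS]mulrA (commr_sign (z a)) -[LHS]mulrA [X in _ * X = _]mulrA z_zseq /= mulSn exprD.
rewrite !mulrA; congr (_ * _ * _);
by rewrite -!exprD addnC.
Qed.

Lemma zseq_nuniq s : ~~ uniq s -> zseq s = 0.
Proof.
elim: s => [|a s IH] //=; rewrite negb_and negbK; case/orP => [ain|]; last first.
  by move/IH => e; rewrite /zseq big_cons -/(zseq s) e mulr0.
case/splitPr: ain => s1 s2.
rewrite /zseq big_cons -/(zseq _) zseq_cat /zseq big_cons -!/(zseq _).
by rewrite [LHS]mulrA z_zseq -!mulrA (mulrA (z a)) z0 mul0r !mulr0.
Qed.

Definition inrng (s : seq nat) := all (fun j => (0 < j <= k)%N) s.

Lemma zseq_big s : inrng s -> (k < size s)%N -> zseq s = 0.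
Proof.
move=> hs hk; apply: zseq_nuniq; apply/negP => us.
have : (size s <= size (iota 1 k))%N.
  apply: uniq_leq_size => // j js; move/allP: hs => /(_ j js).
  by rewrite mem_iota; case/andP=> h1 h2; rewrite h1 /= addnC addn1 ltnS.
by rewrite size_iota leqNgt hk.
Qed.

Definition evL (L : seq (R * seq nat)) : R := \sum_(p <- L) p.1 * zseq p.2.

Definition Idd (d : nat) (r : R) : Prop :=
  exists L, r = evL L /\ forall p, p \in L -> [/\ Pc p.1, inrng p.2 & (d <= size p.2)%N].

Lemma Idd0 d : Idd d 0.
Proof. by exists [::]; split => //; rewrite /evL big_nil. Qed.

Lemma IddD d x y : Idd d x -> Idd d y -> Idd d (x + y).
Proof.
move=> [L1 [-> h1]] [L2 [-> h2]]; exists (L1 ++ L2); split.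
  by rewrite /evL big_cat.
by move=> p; rewrite mem_cat; case/orP; [apply: h1 | apply: h2].
Qed.

Lemma Idd_sum d (I : eqType) (r : seq I) (F : I -> R) :
  (forall i, i \in r -> Idd d (F i)) -> Idd d (\sum_(i <- r) F i).
Proof.
elim: r => [|i r IH] h; first by rewrite big_nil; apply: Idd0.
rewrite big_cons; apply: IddD; first by apply: h; rewrite inE eqxx.
by apply: IH => j jr; apply: h; rewrite inE jr orbT.
Qed.

Lemma Idd_term d a s : Pc a -> inrng s -> (d <= size s)%N -> Idd d (a * zseq s).
Proof.
move=> *; exists [:: (a, s)]; split; first by rewrite /evL big_seq1.
by move=> p; rewrite inE => /eqP ->.
Qed.

Lemma Pc_zseq x s : Pc x -> x * zseq s = zseq s * x.
Proof.
move=> hx; elim: s => [|j s IH]; first by rewrite /zseq big_nil mul1r mulr1.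
by rewrite /zseq big_cons -/(zseq s) mulrA Pcz // -mulrA IH mulrA.
Qed.

Lemma IddM a b x y : Idd a x -> Idd b y -> Idd (a + b) (x * y).
Proof.
move=> [L1 [-> h1]] [L2 [-> h2]].
rewrite /evL big_distrl /=; apply: Idd_sum => p pL1.
rewrite big_distrr /=; apply: Idd_sum => q qL2.
case: (h1 p pL1) => hp1 hp2 hp3; case: (h2 q qL2) => hq1 hq2 hq3.
rewrite -mulrA (mulrA (zseq _)) -Pc_zseq // -!mulrA -zseq_cat mulrA.
apply: Idd_term; first by apply: PcM.
  by rewrite /inrng all_cat; apply/andP.
by rewrite size_cat leq_add.
Qed.

Lemma Idd_zero d r : Idd d r -> (k < d)%N -> r = 0.
Proof.
move=> [L [-> h]] hd; rewrite /evL big1_seq // => p /andP [_ pL].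
case: (h p pL) => _ h2 h3; rewrite zseq_big ?mulr0 //.
exact: leq_trans hd h3.
Qed.

Lemma Idd_zero0 d r : (forall j, z j = 0) -> Idd d r -> (0 < d)%N -> r = 0.
Proof.
move=> z0' [L [-> h]] hd; rewrite /evL big1_seq // => p /andP [_ pL].
case: (h p pL) => _ h2 h3; case: p.2 h3 => [|j s] /=; first by rewrite leqn0 => /eqP e; rewrite e in hd.
by rewrite /zseq big_cons z0' mul0r mulr0.
Qed.


Fixpoint expand (t : ncterm K) : seq (R * seq nat) :=
  match t with
  | NVar i => [:: (c i, [::]); (1, [:: i])]
  | NConst a => [:: (cst a, [::])]
  | NAdd t1 t2 => expand t1 ++ expand t2
  | NOpp t1 => [seq (- p.1, p.2) | p <- expand t1]
  | NMul t1 t2 => [seq (p.1 * q.1, p.2 ++ q.2) | p <- expand t1, q <- expand t2]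
  end.

Lemma expand_prop t : forall p, p \in expand t -> Pc p.1.
Proof.
elim: t => [i|a|t1 IH1 t2 IH2|t1 IH1|t1 IH1 t2 IH2] p /=.
- by rewrite !inE => /orP [] /eqP -> /=; [apply: Pcc|apply: Pc1].
- by rewrite inE => /eqP -> /=; apply: Pccst.
- by rewrite mem_cat; case/orP; [apply: IH1|apply: IH2].
- by case/mapP => q qi ->; apply: PcN; apply: IH1.
- by case/allpairsP => [[q1 q2] [h1 h2 ->]]; apply: PcM; [apply: IH1|apply: IH2].
Qed.

Lemma expand_rng t : nvars_in k t -> forall p, p \in expand t -> inrng p.2.
Proof.
elim: t => [i|a|t1 IH1 t2 IH2|t1 IH1|t1 IH1 t2 IH2] /= hv p.
- by rewrite !inE; case/orP => /eqP -> //=; rewrite /inrng /= andbT.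
- by rewrite inE => /eqP ->.
- case/andP: hv => h1 h2.
  by rewrite mem_cat; case/orP; [apply: IH1|apply: IH2].
- by case/mapP => q qi ->; exact: (IH1 hv q qi).
- case/andP: hv => hv1 hv2.
  case/allpairsP => [[q1 q2] [i1 i2 ->]] /=.
  by rewrite /inrng all_cat; apply/andP; split; [apply: (IH1 hv1)|apply: (IH2 hv2)].
Qed.

Lemma expand_ok g (gE : forall i, g i = c i + z i) t : evR g t = evL (expand t).
Proof.
elim: t => [i|a|t1 IH1 t2 IH2|t1 IH1|t1 IH1 t2 IH2] /=.
- by rewrite gE /evL !big_cons big_nil /zseq !big_nil big_cons big_nil !mulr1 mul1r addr0.
- by rewrite /evL big_seq1 /zseq big_nil mulr1.
- by rewrite /evL big_cat IH1 IH2.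
- by rewrite IH1 /evL big_map -sumrN; apply: eq_bigr => p _; rewrite mulNr.
- rewrite IH1 IH2 /evL big_allpairs_dep big_distrl /=; apply: eq_big_seq => p pin.
  rewrite big_distrr /=; apply: eq_big_seq => q qin /=.
  rewrite zseq_cat -!mulrA; congr (_ * _); rewrite !mulrA; congr (_ * _).
  by rewrite Pc_zseq //; apply: (expand_prop qin).
Qed.

Lemma comm_Idd g (gE : forall i, g i = c i + z i) t1 t2 :
  nvars_in k t1 -> nvars_in k t2 -> Idd 2 (evR g (ncomm t1 t2)).
Proof.
move=> h1 h2; rewrite /ncomm /= !(expand_ok gE) /evL.
have E (A B : seq (R * seq nat)) (F G : R * seq nat -> R) :
    (\sum_(p <- A) F p) * (\sum_(q <- B) G q) = \sum_(p <- A) \sum_(q <- B) F p * G q.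
  by rewrite mulr_suml; apply: eq_bigr => p _; rewrite mulr_sumr.
rewrite !E [X in _ - X]exchange_big /= -sumrB.
apply: Idd_sum => p pin; rewrite -sumrB.
apply: Idd_sum => q qin.
have Pp := expand_prop pin; have Pq := expand_prop qin.
have rp := expand_rng h1 pin; have rq := expand_rng h2 qin.
have e1 : p.1 * zseq p.2 * (q.1 * zseq q.2) = p.1 * q.1 * (zseq p.2 * zseq q.2).
  by rewrite !mulrA -[p.1 * zseq p.2 * q.1]mulrA -(@Pc_zseq q.1 p.2 Pq) mulrA.
have e2 : q.1 * zseq q.2 * (p.1 * zseq p.2) = p.1 * q.1 * (zseq q.2 * zseq p.2).
  by rewrite !mulrA -[q.1 * zseq q.2 * p.1]mulrA -(@Pc_zseq p.1 q.2 Pp) mulrA (PcC Pq Pp).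
rewrite e1 e2 zseq_comm.
case: (boolP (odd (size p.2) && odd (size q.2))) => [/andP [op oq]|hpq].
  have -> : (-1) ^+ (size p.2 * size q.2) = -1 :> R.
    by rewrite -signr_odd oddM op oq expr1.
  rewrite mulN1r -zseq_cat.
  have -> : forall a b : R, a * - b - a * b = (- a + - a) * b.
    by move=> a b; rewrite mulrDl !mulNr mulrN.
  apply: Idd_term; first by apply: PcD; apply: PcN; apply: PcM.
    by rewrite /inrng all_cat; apply/andP.
  rewrite size_cat; case: (size p.2) op => //; case: (size q.2) oq => // a _ b _; by rewrite addSn addnS.
have -> : (-1) ^+ (size p.2 * size q.2) = 1 :> R.
  by rewrite -signr_odd oddM (negbTE hpq) expr0.
by rewrite mul1r subrr; apply: Idd0.
Qed.

End Gen.


Section Model.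
Variables (K : fieldType) (N : nat).
Local Notation ST := {set 'I_N}.
Definition dim := #|{: ST}|.
Local Notation R := 'M[K]_dim.

Definition ent (M : R) (U T : ST) : K := M (enum_rank U) (enum_rank T).
Definition mkM (f : ST -> ST -> K) : R := \matrix_(i, j) f (enum_val i) (enum_val j).

Lemma ent_mkM f U T : ent (mkM f) U T = f U T.
Proof. by rewrite /ent /mkM mxE !enum_rankK. Qed.

Lemma entP (A B : R) : (forall U T, ent A U T = ent B U T) -> A = B.
Proof.
move=> h; apply/matrixP => i j; rewrite -(enum_valK i) -(enum_valK j); exact: h.
Qed.

Lemma ent_mul (A B : R) U T : ent (A * B) U T = \sum_(V : ST) ent A U V * ent B V T.
Proof.
rewrite /ent mxE (reindex enum_rank) //; apply: onW_bij; exact: enum_rank_bij.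
Qed.

Lemma ent_add (A B : R) U T : ent (A + B) U T = ent A U T + ent B U T.
Proof. by rewrite /ent mxE. Qed.
Lemma ent_opp (A : R) U T : ent (- A) U T = - ent A U T.
Proof. by rewrite /ent mxE. Qed.
Lemma ent_scale a (A : R) U T : ent (a *: A) U T = a * ent A U T.
Proof. by rewrite /ent mxE. Qed.
Lemma ent1 U T : ent 1 U T = (U == T)%:R.
Proof. by rewrite /ent mxE (inj_eq enum_rank_inj). Qed.
Lemma ent0 U T : ent 0 U T = 0.
Proof. by rewrite /ent mxE. Qed.
Lemma ent_sum (I : Type) (r : seq I) (F : I -> R) U T :
  ent (\sum_(i <- r) F i) U T = \sum_(i <- r) ent (F i) U T.
Proof.
elim: r => [|i r IH]; first by rewrite !big_nil ent0.
by rewrite !big_cons ent_add IH.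
Qed.


Definition wset (w : seq nat) : ST := [set i : 'I_N | val i \in w].
Definition cntT (T : ST) (a : nat) : nat := #|[set b in T | (val b < a)%N]|.
Definition disj (w : seq nat) (T : ST) : bool := [forall b in T, val b \notin w].
Definition ea (a : nat) (U T : ST) : K :=
  if [&& (a < N)%N, a \notin [seq val b | b in T] & U == wset [:: a] :|: T]
  then (-1) ^+ cntT T a else 0.
Definition Ea (a : nat) : R := mkM (ea a).
Definition Hw (w : seq nat) : R := \prod_(a <- w) Ea a.
Definition crossw (w : seq nat) (T : ST) : nat := \sum_(a <- w) cntT T a.
Definition wcond (w : seq nat) (T : ST) : bool :=
  [&& all (fun a => a < N)%N w, uniq w & disj w T].

Lemma card_wset (w : seq nat) : uniq w -> all (fun a => a < N)%N w -> #|wset w| = size w.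
Proof.
elim: w => [|a w IH] /=.
  by move=> _ _; apply/eqP; rewrite cards_eq0; apply/eqP/setP => i; rewrite !inE.
case/andP => aw uw /andP [aN allw].
have -> : wset (a :: w) = (Ordinal aN) |: wset w.
  by apply/setP => i; rewrite !inE -val_eqE.
by rewrite cardsU1 IH // inE /= aw.
Qed.

Lemma wset_filter (w : seq nat) (P : pred nat) :
  [set b in wset w | P (val b)] = wset (filter P w).
Proof. by apply/setP => i; rewrite !inE mem_filter andbC. Qed.

Lemma cnt_wsetU w T a : wcond w T ->
  cntT (wset w :|: T) a = (count (fun b => b < a) w + cntT T a)%N.
Proof.
case/and3P => hall hu hd; rewrite /cntT.
have -> : [set b in wset w :|: T | (val b < a)%N] =
   [set b in wset w | (val b < a)%N] :|: [set b in T | (val b < a)%N].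
  by apply/setP => i; rewrite !inE andb_orl.
rewrite cardsU (wset_filter w (fun b => (b < a)%N)) card_wset ?filter_uniq ?all_filter //; last first.
  by apply/allP => x xw /=; apply/implyP => _; move/allP: hall; apply.
have -> : wset (filter (fun b => b < a)%N w) :&: [set b in T | (val b < a)%N] = set0.
  apply/setP => i; rewrite !inE mem_filter; apply/negP => /and3P [/andP [_ iw] iT _].
  by move/forallP: hd => /(_ i); rewrite iT iw.
by rewrite cards0 subn0 size_filter.
Qed.


Lemma memvT x (A : ST) : (x \in [seq val b | b in A]) = [exists b in A, val b == x].
Proof.
apply/mapP/existsP => [[b bA ->]|[b /andP [bA /eqP <-]]].
  by exists b; rewrite -mem_enum bA eqxx.
by exists b; rewrite ?mem_enum.
Qed.

Lemma wcond_cons a w T : wcond (a :: w) T =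
  [&& (a < N)%N, a \notin w, a \notin [seq val b | b in T] & wcond w T].
Proof.
rewrite /wcond /= memvT.
have -> : disj (a :: w) T = ~~ [exists b in T, val b == a] && disj w T.
  apply/idP/idP.
    move/forallP => h; apply/andP; split.
      by apply/existsP => [[b /andP [bT /eqP ba]]]; move: (h b); rewrite bT inE ba eqxx.
    by apply/forallP => b; apply/implyP => bT; move: (h b); rewrite bT inE negb_or => /andP [].
  case/andP => /existsPn h1 /forallP h2; apply/forallP => b; apply/implyP => bT.
  rewrite inE negb_or; move: (h1 b) (h2 b); rewrite bT /= => -> /= ->.
  by [].
by case: (a < N)%N; case: (a \in w); case: (uniq w); case: [exists _ in _, _]; case: (all _ _).
Qed.

Lemma wset_cons a w : wset (a :: w) = wset [:: a] :|: wset w.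
Proof. by apply/setP => i; rewrite !inE. Qed.

Lemma ent_Hw w U T : ent (Hw w) U T =
  if wcond w T && (U == wset w :|: T) then (-1) ^+ (ginv w + crossw w T) else 0.
Proof.
elim: w U => [|a w IH] U.
  rewrite /Hw big_nil ent1 /wcond /= /crossw big_nil.
  have -> : disj [::] T by apply/forallP => b; apply/implyP.
  have -> : wset [::] = set0 by apply/setP => i; rewrite !inE.
  by rewrite set0U; case: (U == T).
rewrite /Hw big_cons -/(Hw w) ent_mul.
case hw: (wcond w T); last first.
  rewrite big1; first by rewrite wcond_cons hw !andbF.
  by move=> V _; rewrite IH hw /= mulr0.
rewrite (bigD1 (wset w :|: T)) //= big1 ?addr0; last first.
  by move=> V /negbTE hV; rewrite IH hw hV /= mulr0.
rewrite IH hw eqxx /= /Ea ent_mkM /ea wcond_cons hw andbT.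
case aN: (a < N)%N => /=; last by rewrite mul0r.
have -> : (a \notin [seq val b | b in wset w :|: T]) = (a \notin w) && (a \notin [seq val b | b in T]).
  rewrite !memvT -negb_or; congr (~~ _); apply/existsP/orP.
    case=> b /andP []; rewrite inE => /orP [bw|bT] /eqP ba.
      by left; rewrite -ba; move: bw; rewrite inE.
    by right; apply/existsP; exists b; rewrite bT ba eqxx.
  case=> [aw|/existsP [b /andP [bT ba]]].
    by exists (Ordinal aN); rewrite !inE aw eqxx.
  by exists b; rewrite inE bT orbT.
rewrite setUA -wset_cons.
case: (_ && _) => /=; last by rewrite mul0r.
rewrite -exprD cnt_wsetU // /crossw big_cons /=; congr (_ ^+ _); lia.
Qed.


Lemma Hw2 a b : Ea a * Ea b = Hw [:: a; b].
Proof. by rewrite /Hw !big_cons big_nil mulr1. Qed.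

Lemma Ea_anti a b : Ea a * Ea b = - (Ea b * Ea a).
Proof.
apply: entP => U T; rewrite ent_opp !Hw2 !ent_Hw.
have -> : wset [:: b; a] = wset [:: a; b] by apply/setP => i; rewrite !inE orbC.
rewrite !wcond_cons !inE.
case ab: (a == b).
  by move/eqP: ab => ->; rewrite eqxx /= !andbF oppr0.
rewrite (eq_sym b a) ab !in_nil /=.
case: (a < N)%N; case: (b < N)%N; case: (a \notin _); case: (b \notin _); rewrite /= ?oppr0 //.
case: (_ && _); last by rewrite oppr0.
rewrite /crossw !big_cons big_nil /=.
have : ((b < a) + (a < b) = 1)%N.
  case: (ltngtP a b) => //= e; by rewrite e eqxx in ab.
move=> e; set E1 := (_ + _ + _ + _)%N; set E2 := (_ + _ + _ + _)%N.
rewrite -(mulN1r ((-1) ^+ E2)) -exprS.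
have -> : E2.+1 = (E1 + 2 * (a < b))%N by rewrite /E1 /E2; lia.
by rewrite exprD exprM sqrrN expr1n expr1n mulr1.
Qed.


Definition Hx (x : grass K) : R := \sum_(p <- x) p.2 *: Hw p.1.

Lemma Hx_add x y : Hx (gadd x y) = Hx x + Hx y.
Proof. by rewrite /Hx /gadd big_cat. Qed.
Lemma Hx_opp x : Hx (gopp x) = - Hx x.
Proof. by rewrite /Hx /gopp big_map -sumrN; apply: eq_bigr => p _; rewrite scaleNr. Qed.
Lemma Hx_nil : Hx [::] = 0.
Proof. by rewrite /Hx big_nil. Qed.
Lemma Hw_cat u w : Hw (u ++ w) = Hw u * Hw w.
Proof. by rewrite /Hw big_cat. Qed.
Lemma Hx_const a : Hx (gconst a) = a *: (1 : R).
Proof. by rewrite /Hx big_seq1 /Hw big_nil. Qed.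

Lemma Hx_mulE x y : Hx x * Hx y = \sum_(p <- x) \sum_(q <- y) (p.2 * q.2) *: (Hw p.1 * Hw q.1).
Proof.
rewrite /Hx mulr_suml; apply: eq_bigr => p _; rewrite mulr_sumr; apply: eq_bigr => q _.
by rewrite -!mulmxE -scalemxAl -scalemxAr scalerA.
Qed.

Lemma Hx_mul x y : Hx (gmul x y) = Hx x * Hx y.
Proof.
by rewrite Hx_mulE /Hx /gmul big_allpairs_dep; apply: eq_bigr => p _; apply: eq_bigr => q _; rewrite Hw_cat.
Qed.

Definition evp (x : grass K) := filter (fun p => ~~ odd (size p.1)) x.
Definition odp (x : grass K) := filter (fun p => odd (size p.1)) x.

Lemma Hx_split x : Hx x = Hx (evp x) + Hx (odp x).
Proof.
by rewrite /Hx [LHS](bigID (fun p : seq nat * K => odd (size p.1))) /= addrC /evp /odp !big_filter.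
Qed.

Lemma Hw_comm u w : Hw u * Hw w = (-1) ^+ (size u * size w) * (Hw w * Hw u).
Proof. exact: (zseq_comm Ea_anti). Qed.

Lemma Hx_ev_comm x y : all (fun p => ~~ odd (size p.1)) x -> Hx x * Hx y = Hx y * Hx x.
Proof.
move=> hx; rewrite !Hx_mulE exchange_big /=; apply: eq_bigr => q _.
apply: eq_big_seq => p px; rewrite mulrC Hw_comm.
move/allP: hx => /(_ p px) hp.
by rewrite -signr_odd oddM (negbTE hp) /= expr0 mul1r.
Qed.

Lemma Hx_od_anti x y : all (fun p => odd (size p.1)) x -> all (fun p => odd (size p.1)) y ->
  Hx x * Hx y = - (Hx y * Hx x).
Proof.
move=> hx hy; rewrite !Hx_mulE exchange_big /= -sumrN; apply: eq_big_seq => q qy.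
rewrite -sumrN; apply: eq_big_seq => p px; rewrite mulrC Hw_comm.
move/allP: hx => /(_ p px) hp; move/allP: hy => /(_ q qy) hq.
by rewrite -signr_odd oddM hp hq /= expr1 mulN1r scalerN.
Qed.

Lemma evp_even x : all (fun p => ~~ odd (size p.1)) (evp x).
Proof. by apply/allP => p; rewrite mem_filter => /andP []. Qed.
Lemma odp_odd x : all (fun p => odd (size p.1)) (odp x).
Proof. by apply/allP => p; rewrite mem_filter => /andP []. Qed.


Definition sv (V : ST) : seq nat := [seq val i | i in V].
Definition sq (V : ST) : seq nat := sort leq (sv V).

Lemma sv_uniq V : uniq (sv V).
Proof. by rewrite /sv map_inj_uniq ?enum_uniq //; exact: val_inj. Qed.

Lemma mem_sv V (i : 'I_N) : (val i \in sv V) = (i \in V).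
Proof. by rewrite /sv mem_map ?mem_enum //; exact: val_inj. Qed.

Lemma sv_lt V x : x \in sv V -> (x < N)%N.
Proof. by rewrite /sv => /imageP [i _ ->]; exact: ltn_ord. Qed.

Lemma sort_sv w V : (sort leq w == sq V) = perm_eq w (sv V).
Proof.
apply/eqP/idP => [e|]; last by move/(perm_sortP leq_total leq_trans anti_leq).
by apply/(perm_sortP leq_total leq_trans anti_leq).
Qed.

Lemma key w (U T : ST) : T \subset U ->
  (wcond w T && (U == wset w :|: T)) = uniq w && (sort leq w == sq (U :\: T)).
Proof.
move=> TU; rewrite sort_sv /wcond.
case uw: (uniq w); last by rewrite /= andbF.
rewrite /=; apply/idP/idP.
  case/andP => /andP [hall hd] /eqP hU.
  apply: uniq_perm => //; first exact: sv_uniq. move=> x; apply/idP/idP => hx.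
    have xN : (x < N)%N by move/allP: hall; apply.
    have -> : x = val (Ordinal xN) by [].
    rewrite mem_sv !inE hU !inE /= hx andbT.
    apply/negP => hT; move/forallP: hd => /(_ (Ordinal xN)).
    by rewrite hT /= hx.
  have xN := sv_lt hx.
  move: hx; have -> : x = val (Ordinal xN) by [].
  rewrite mem_sv !inE hU !inE => /andP [/negbTE -> ]; by rewrite orbF.
move=> hp.
have memw x : (x \in w) = (x \in sv (U :\: T)) by apply: perm_mem.
have hall : all (fun a => a < N)%N w.
  by apply/allP => x; rewrite memw; apply: sv_lt.
rewrite hall /=; apply/andP; split.
  apply/forallP => b; apply/implyP => bT.
  by rewrite memw mem_sv !inE bT.
apply/eqP/setP => i; rewrite !inE memw mem_sv !inE.
by case iT: (i \in T) => /=; rewrite ?orbT ?orbF //; exact: (subsetP TU _ iT).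
Qed.

Lemma crossw_perm w w' T : perm_eq w w' -> crossw w T = crossw w' T.
Proof. by move=> h; rewrite /crossw (perm_big _ h). Qed.

Lemma ent_Hx x (U T : ST) : T \subset U ->
  ent (Hx x) U T = (-1) ^+ crossw (sq (U :\: T)) T * gcoef x (sq (U :\: T)).
Proof.
move=> TU; rewrite /Hx ent_sum /gcoef mulr_sumr [RHS]big_mkcond /=.
apply: eq_bigr => p _; rewrite ent_scale ent_Hw key //.
case: ifP => [/andP [up /eqP hs]|_]; last by rewrite mulr0.
have hp : perm_eq (sort leq p.1) p.1 by rewrite perm_sort.
rewrite -hs (crossw_perm T hp) /gsign exprD.
by rewrite [LHS]mulrC [RHS]mulrA [X in _ = X * _]mulrC.
Qed.

Lemma ent_Hx_nsub x (U T : ST) : ~~ (T \subset U) -> ent (Hx x) U T = 0.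
Proof.
move=> TU; rewrite /Hx ent_sum big1 // => p _; rewrite ent_scale ent_Hw.
case: ifP; last by rewrite mulr0.
case/andP => _ /eqP hU; move: TU; by rewrite hU subsetUr.
Qed.

Lemma gzero_Hx x : gzero x -> Hx x = 0.
Proof.
move=> hz; apply: entP => U T; rewrite ent0.
case TU: (T \subset U); first by rewrite ent_Hx // hz mulr0.
by rewrite ent_Hx_nsub // TU.
Qed.

End Model.






Lemma Hx0_gzero (K : fieldType) (x : grass K) : (forall N, Hx N x = 0) -> gzero x.
Proof.
move=> h S.
case: (boolP (uniq S && sorted leq S)) => [/andP [uS sS]|hS]; last first.
  rewrite /gcoef big1_seq // => p /andP [/andP [up /eqP e] _]; exfalso.
  by move: hS; rewrite -e sort_uniq up sort_sorted //; exact: leq_total.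
set N := (\max_(a <- S) a).+1.
have allN : all (fun a => a < N)%N S.
  by apply/allP => a aS; rewrite ltnS; exact: (@leq_bigmax_seq _ S xpredT (fun a => a) a aS).
have sqS : sq (wset N S) = S.
  rewrite /sq -{2}(sorted_sort leq_trans sS); apply/(perm_sortP leq_total leq_trans anti_leq).
  apply: uniq_perm => //; first exact: sv_uniq.
  move=> y; apply/idP/idP.
    by rewrite /sv => /imageP [i]; rewrite inE => iS ->.
  move=> yS; have yN : (y < N)%N by move/allP: allN; apply.
  by have -> : y = val (Ordinal yN) by []; rewrite mem_sv inE.
have := h N; move/(congr1 (fun M => ent M (wset N S) set0)).
rewrite ent_Hx ?sub0set // ent0 setD0 sqS.
have -> : crossw S (set0 : {set 'I_N}) = 0%N.
  by rewrite /crossw big1 // => a _; rewrite /cntT; apply/eqP; rewrite cards_eq0; apply/eqP/setP => i; rewrite !inE.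
by rewrite expr0 mul1r.
Qed.

Lemma odp_gzero (K : fieldType) (x : grass K) : geven x -> gzero (odp x).
Proof.
move=> hx S; rewrite /gcoef /odp big_filter_cond.
case: (boolP (odd (size S))) => hS.
  rewrite -[RHS](hx S hS) /gcoef; apply: eq_bigl => p.
  case: (boolP (uniq p.1 && (sort leq p.1 == S))) => [/andP [_ /eqP e]|]; last by rewrite andbF.
  by rewrite andbT -(size_sort leq) e.
rewrite big1 // => p /andP [hp /andP [_ /eqP e]].
by move: hS; rewrite -e size_sort hp.
Qed.

Section Asm.
Variables (K : fieldType) (N : nat) (v : nat -> tri K) (hv : forall i, inA (v i))
  (h2 : (2%:R : K) != 0).
Local Notation R := 'M[K]_(dim N).
Local Notation H := (@Hx K N).

Definition Pc (r : R) : Prop := exists x : grass K, all (fun p => ~~ odd (size p.1)) x /\ r = H x.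
Definition cst (a : K) : R := H (gconst a).
Definition X j := H (t11 (v j)).
Definition Y j := H (t22 (v j)).
Definition cY j := H (evp (t22 (v j))).
Definition zY j := H (odp (t22 (v j))).

Lemma PcD x y : Pc x -> Pc y -> Pc (x + y).
Proof.
move=> [a [ha ->]] [b [hb ->]]; exists (gadd a b); split; last by rewrite Hx_add.
by rewrite /gadd all_cat ha hb.
Qed.
Lemma PcN x : Pc x -> Pc (- x).
Proof.
move=> [a [ha ->]]; exists (gopp a); split; last by rewrite Hx_opp.
by rewrite /gopp all_map.
Qed.
Lemma PcM x y : Pc x -> Pc y -> Pc (x * y).
Proof.
move=> [a [ha ->]] [b [hb ->]]; exists (gmul a b); split; last by rewrite Hx_mul.
apply/allP => p /allpairsP [[p1 p2] [i1 i2 ->]] /=.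
move/allP: ha => /(_ _ i1); move/allP: hb => /(_ _ i2).
by rewrite size_cat oddD => /negbTE -> /negbTE ->.
Qed.
Lemma Pccst a : Pc (cst a).
Proof. by exists (gconst a). Qed.
Lemma Pc1 : Pc 1.
Proof. by exists (gconst 1); rewrite Hx_const scale1r. Qed.
Lemma PcC x y : Pc x -> Pc y -> x * y = y * x.
Proof. by move=> [a [ha ->]] [b [hb ->]]; apply: Hx_ev_comm. Qed.
Lemma PczY x j : Pc x -> x * zY j = zY j * x.
Proof. by move=> [a [ha ->]]; apply: Hx_ev_comm. Qed.
Lemma zYA i j : zY i * zY j = - (zY j * zY i).
Proof. by apply: Hx_od_anti; apply: odp_odd. Qed.
Lemma zY0 i : zY i * zY i = 0.
Proof.
have e := zYA i i; set r := zY i * zY i in e *.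
have : (2%:R : K) *: r = 0 by rewrite scaler_nat mulr2n {1}e addNr.
by move/eqP; rewrite scaler_eq0 (negbTE h2) /= => /eqP.
Qed.
Lemma PccY j : Pc (cY j).
Proof. by exists (evp (t22 (v j))); split => //; apply: evp_even. Qed.
Lemma PcX j : Pc (X j).
Proof.
exists (evp (t11 (v j))); split; first exact: evp_even.
by rewrite /X Hx_split (gzero_Hx N (odp_gzero (hv j))) addr0.
Qed.
Lemma YE j : Y j = cY j + zY j.
Proof. exact: Hx_split. Qed.

Lemma H11_eval t : H (t11 (evalA v t)) = evR cst X t.
Proof.
elim: t => //= [t1 IH1 t2 IH2|t1 IH1|t1 IH1 t2 IH2].
- by rewrite Hx_add IH1 IH2.
- by rewrite Hx_opp IH1.
- by rewrite Hx_mul IH1 IH2.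
Qed.
Lemma H22_eval t : H (t22 (evalA v t)) = evR cst Y t.
Proof.
elim: t => //= [t1 IH1 t2 IH2|t1 IH1|t1 IH1 t2 IH2].
- by rewrite Hx_add IH1 IH2.
- by rewrite Hx_opp IH1.
- by rewrite Hx_mul IH1 IH2.
Qed.


Lemma H12_tmul a b : H (t12 (tmul a b)) = H (t11 a) * H (t12 b) + H (t12 a) * H (t22 b).
Proof. by rewrite /tmul /= Hx_add !Hx_mul. Qed.

Section Main.
Variables (k : nat) (s : nat -> ncterm K) (hs : forall i, nvars_in k (s i)).

Definition Tj j := evalA v (nsubst s (cprod K j)).
Definition Cj j := evalA v (ncomm (s (2 * j).+1) (s (2 * j).+2)).

Lemma T_S j : Tj j.+1 = tmul (Tj j) (Cj j).
Proof. by []. Qed.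

Lemma C11 j : H (t11 (Cj j)) = 0.
Proof.
rewrite /Cj H11_eval.
apply: (@Idd_zero0 _ Pc (fun _ => 0) k 2) => //.
apply: (@comm_Idd K _ Pc cst (fun _ => 0) X k PcD PcN PcM Pc1 Pccst PcX PcC) => //.
- by move=> x j' _; rewrite mulr0 mul0r.
- by move=> i' j'; rewrite mulr0 oppr0.
- by move=> i'; rewrite addr0.
Qed.

Lemma C22 j : Idd Pc zY k 2 (H (t22 (Cj j))).
Proof.
rewrite /Cj H22_eval.
apply: (@comm_Idd K _ Pc cst zY cY k PcD PcN PcM Pc1 Pccst PccY PcC PczY zYA) => //.
exact: YE.
Qed.

Lemma T22 j : Idd Pc zY k (2 * j) (H (t22 (Tj j))).
Proof.
elim: j => [|j IH].
  rewrite muln0 /Tj /= -(mulr1 (H (gconst 1))).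
  have -> : (1 : R) = zseq zY [::] by rewrite /zseq big_nil.
  by apply: Idd_term => //; apply: Pccst.
rewrite T_S /= Hx_mul mulnSr.
exact: (IddM PcM PczY IH (C22 j)).
Qed.

Lemma T11 j : H (t11 (Tj j.+1)) = 0.
Proof. by rewrite T_S /= Hx_mul C11 mulr0. Qed.

Lemma T12 j : exists b D, H (t12 (Tj j.+1)) = b * D /\ Idd Pc zY k (2 * j) D.
Proof.
elim: j => [|j [b [D [hb hD]]]].
  exists (H (t12 (Tj 1))), 1; split; first by rewrite mulr1.
  have -> : (1 : R) = 1 * zseq zY [::] by rewrite /zseq big_nil mulr1.
  by apply: Idd_term => //; apply: Pc1.
exists b, (D * H (t22 (Cj j.+1))); split.
  by rewrite T_S H12_tmul T11 mul0r add0r hb mulrA.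
rewrite mulnSr; exact: (IddM PcM PczY hD (C22 _)).
Qed.

Lemma Tfinal m : (k < 2 * m)%N ->
  [/\ H (t11 (Tj m.+1)) = 0, H (t12 (Tj m.+1)) = 0 & H (t22 (Tj m.+1)) = 0].
Proof.
move=> hk; split; first exact: T11.
  case: (T12 m) => b [D [-> hD]].
  by rewrite (Idd_zero zYA zY0 hD hk) mulr0.
apply: (Idd_zero zYA zY0 (T22 m.+1)); rewrite mulnS; lia.
Qed.

End Main.

End Asm.


Lemma PI_gen (K : fieldType) (charK0 : [pchar K]%R =i pred0) k m :
  (k < 2 * m)%N -> PI_of_F k (cprod K m.+1).
Proof.
move=> hk s hs v hv.
have h2 : (2%:R : K) != 0.
  by move/pcharf0P: charK0 => /(_ 2%N) ->.
have hN N := @Tfinal K N v hv h2 k s hs m hk.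
split; apply: Hx0_gzero => N; by case: (hN N).
Qed.

Local Close Scope ring_scope.

Theorem proposition3p3 (K : fieldType) (charK0 : [pchar K]%R =i pred0)
    (n : nat) (hn : (2 <= n)%N) (hev : ~~ odd n) :
  PI_of_F n (cprod K (n./2 + 2)) /\ PI_of_F n.+1 (cprod K (n./2 + 2)).
Proof.
have e : (n./2 + 2 = (n./2 + 1).+1)%N by rewrite addnS addn1.
have h : (n./2.*2 = n)%N by rewrite halfK (negbTE hev) subn0.
rewrite e; split; apply: PI_gen => //; rewrite -h -mul2n; lia.
Qed.
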